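(* Let $f:(\mathcal A,\equiv_A)\to(\mathcal C,\equiv_C)$ and $g:(\mathcal B,\equiv_B)\to(\mathcal C,\equiv_C)$ be total maps of equivalence families, with underlying sets $A=\bigcup\mathcal A$, $B=\bigcup\mathcal B$. Let $D=\{(a,b)\in A\times B\mid f(a)\equiv_C g(b)\}$ with projections $\pi_1,\pi_2$, let $d\equiv_D d'$ iff $\pi_1(d)\equiv_A\pi_1(d')$ and $\pi_2(d)\equiv_B\pi_2(d')$, and let $\mathcal D$ consist of those $x\subseteq D$ with $\pi_1x\in\mathcal A$, $\pi_2x\in\mathcal B$ and such that for every $d\in x$ there are $d_1,\dots,d_n\in x$ with $d_n=d$ and $\pi_1\{d_1,\dots,d_i\}\in\mathcal A$ and $\pi_2\{d_1,\dots,d_i\}\in\mathcal B$ for all $i\le n$. Then $(\mathcal D,\equiv_D)$ with $\pi_1,\pi_2$ is a pseudo pullback of $f$ and $g$ in the category of equivalence families; if $\equiv_C$ is the identity it is moreover a pullback.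
   Context: A family of configurations is a family $\mathcal F$ of sets such that (i) if $X\subseteq\mathcal F$ is finitely compatible in $\mathcal F$ (every finite subfamily has an upper bound in $\mathcal F$) then $\bigcup X\in\mathcal F$; and (ii) if $e\in x\in\mathcal F$ there are $e_1,\dots,e_n=e$ in $x$ with $\{e_1,\dots,e_i\}\in\mathcal F$ for all $i\le n$. An equivalence family (ef) $(\mathcal A,\equiv_A)$ is a family of configurations $\mathcal A$ with an equivalence relation $\equiv_A$ on $\bigcup\mathcal A$. A map of ef's $f:(\mathcal A,\equiv_A)\to(\mathcal B,\equiv_B)$ is a partial function $f:\bigcup\mathcal A\rightharpoonup\bigcup\mathcal B$ preserving $\equiv$ (if $a_1\equiv_A a_2$ then $f(a_1),f(a_2)$ are both undefined or both defined and equivalent) such that for every $x\in\mathcal A$, $fx\in\mathcal B$ and for $a_1,a_2\in x$, $f(a_1)\equiv_B f(a_2)$ implies $a_1\equiv_A a_2$. Maps compose as partial functions. Two maps are equivalent, $f_1\equiv f_2$, iff they are defined on the same elements and $f_1(a)\equiv f_2(a)$ wherever defined. A pseudo pullback of $f,g$ is an ef $\mathcal D$ with maps $p:\mathcal D\to\mathcal A$, $q:\mathcal D\to\mathcal B$ such that $f\circ p\equiv g\circ q$ and for every $\mathcal D'$ with maps $p',q'$ satisfying $f\circ p'\equiv g\circ q'$ there is a unique map $h:\mathcal D'\to\mathcal D$ with $p'=p\circ h$ and $q'=q\circ h$. *)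

(* Defs.v *)
From Stdlib Require Import List.
Import ListNotations.

Definition set_of (T : Type) := T -> Prop.
Definition subset {T} (x y : T -> Prop) := forall e, x e -> y e.
Definition set_of_list {T} (l : list T) : T -> Prop := fun e => In e l.
Definition bigunion {T} (X : (T -> Prop) -> Prop) : T -> Prop :=
  fun e => exists y, X y /\ y e.

Definition fin_compatible {T} (F : (T -> Prop) -> Prop) (X : (T -> Prop) -> Prop) :=
  forall l : list (T -> Prop), (forall y, In y l -> X y) ->
    exists z, F z /\ forall y, In y l -> subset y z.

Definition family_of_configurations {T} (F : (T -> Prop) -> Prop) : Prop :=
  (forall X : (T -> Prop) -> Prop, subset X F -> fin_compatible F X -> F (bigunion X))
  /\
  (forall x e, F x -> x e ->
     exists l : list T, l <> [] /\ last l e = e /\ (forall e', In e' l -> x e') /\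
       forall i, 1 <= i <= length l -> F (set_of_list (firstn i l))).

Record ef := EF { carrier : Type;
                  fam : (carrier -> Prop) -> Prop;
                  eqv : carrier -> carrier -> Prop }.

Definition inU (A : ef) : carrier A -> Prop := bigunion (fam A).

Definition equiv_on {T} (U : T -> Prop) (R : T -> T -> Prop) :=
  (forall a, U a -> R a a) /\
  (forall a b, U a -> U b -> R a b -> R b a) /\
  (forall a b c, U a -> U b -> U c -> R a b -> R b c -> R a c).

Definition is_ef (A : ef) : Prop :=
  family_of_configurations (fam A) /\ equiv_on (inU A) (eqv A).

(* partial maps; only their values on inU A matter *)
Definition pmap (A B : ef) := carrier A -> option (carrier B).

Definition image {A B : ef} (f : pmap A B) (x : carrier A -> Prop) : carrier B -> Prop :=
  fun b => exists a, x a /\ f a = Some b.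

Definition is_map (A B : ef) (f : pmap A B) : Prop :=
  (forall a, inU A a -> forall b, f a = Some b -> inU B b) /\
  (forall a1 a2, inU A a1 -> inU A a2 -> eqv A a1 a2 ->
     (f a1 = None /\ f a2 = None) \/
     exists b1 b2, f a1 = Some b1 /\ f a2 = Some b2 /\ eqv B b1 b2) /\
  (forall x, fam A x -> fam B (image f x)) /\
  (forall x, fam A x -> forall a1 a2 b1 b2, x a1 -> x a2 ->
     f a1 = Some b1 -> f a2 = Some b2 -> eqv B b1 b2 -> eqv A a1 a2).

Definition total_map (A B : ef) (f : pmap A B) : Prop :=
  forall a, inU A a -> exists b, f a = Some b.

Definition comp {A B C : ef} (g : pmap B C) (f : pmap A B) : pmap A C :=
  fun a => match f a with Some b => g b | None => None end.

Definition map_eq {A B : ef} (f1 f2 : pmap A B) : Prop :=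
  forall a, inU A a -> f1 a = f2 a.

Definition map_equiv {A B : ef} (f1 f2 : pmap A B) : Prop :=
  forall a, inU A a ->
    (f1 a = None <-> f2 a = None) /\
    (forall b1 b2, f1 a = Some b1 -> f2 a = Some b2 -> eqv B b1 b2).

Definition pseudo_pullback (A B C : ef) (f : pmap A C) (g : pmap B C)
    (D : ef) (p : pmap D A) (q : pmap D B) : Prop :=
  is_ef D /\ is_map D A p /\ is_map D B q /\ map_equiv (comp f p) (comp g q) /\
  forall (D' : ef) (p' : pmap D' A) (q' : pmap D' B),
    is_ef D' -> is_map D' A p' -> is_map D' B q' ->
    map_equiv (comp f p') (comp g q') ->
    exists h : pmap D' D, is_map D' D h /\ map_eq p' (comp p h) /\ map_eq q' (comp q h) /\
      forall h' : pmap D' D, is_map D' D h' ->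
        map_eq p' (comp p h') -> map_eq q' (comp q h') -> map_eq h' h.

Definition pullback (A B C : ef) (f : pmap A C) (g : pmap B C)
    (D : ef) (p : pmap D A) (q : pmap D B) : Prop :=
  is_ef D /\ is_map D A p /\ is_map D B q /\ map_eq (comp f p) (comp g q) /\
  forall (D' : ef) (p' : pmap D' A) (q' : pmap D' B),
    is_ef D' -> is_map D' A p' -> is_map D' B q' ->
    map_eq (comp f p') (comp g q') ->
    exists h : pmap D' D, is_map D' D h /\ map_eq p' (comp p h) /\ map_eq q' (comp q h) /\
      forall h' : pmap D' D, is_map D' D h' ->
        map_eq p' (comp p h') -> map_eq q' (comp q h') -> map_eq h' h.

Section Construction.
Variables (A B C : ef) (f : pmap A C) (g : pmap B C).

Definition inD (d : carrier A * carrier B) : Prop :=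
  inU A (fst d) /\ inU B (snd d) /\
  exists c1 c2, f (fst d) = Some c1 /\ g (snd d) = Some c2 /\ eqv C c1 c2.

Definition pi1set (x : carrier A * carrier B -> Prop) : carrier A -> Prop :=
  fun a => exists b, x (a, b).
Definition pi2set (x : carrier A * carrier B -> Prop) : carrier B -> Prop :=
  fun b => exists a, x (a, b).

Definition famD (x : carrier A * carrier B -> Prop) : Prop :=
  subset x inD /\ fam A (pi1set x) /\ fam B (pi2set x) /\
  forall d, x d ->
    exists l : list (carrier A * carrier B),
      l <> [] /\ last l d = d /\ (forall d', In d' l -> x d') /\
      forall i, 1 <= i <= length l ->
        fam A (pi1set (set_of_list (firstn i l))) /\
        fam B (pi2set (set_of_list (firstn i l))).

Definition eqD (d d' : carrier A * carrier B) : Prop :=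
  eqv A (fst d) (fst d') /\ eqv B (snd d) (snd d').

Definition pbD : ef := EF (carrier A * carrier B) famD eqD.

Definition pi1 : pmap pbD A := fun d => Some (fst d).
Definition pi2 : pmap pbD B := fun d => Some (snd d).
End Construction.

(* Main.v *)
Require Import Defs.
From Stdlib Require Import List Lia FunctionalExtensionality PropExtensionality.
Import ListNotations.

Lemma pred_ext {T} (P Q : T -> Prop) : (forall x, P x <-> Q x) -> P = Q.
Proof. intro H. apply functional_extensionality; intro x. apply propositional_extensionality; auto. Qed.

Lemma In_firstn {T} (e : T) i l : In e (firstn i l) -> In e l.
Proof. intro H. rewrite <- (firstn_skipn i l). apply in_or_app; auto. Qed.

Lemma firstn_app_le {T} (l r : list T) i : i <= length l -> firstn i (l ++ r) = firstn i l.
Proof. intros. rewrite firstn_app. replace (i - length l) with 0 by lia. simpl. apply app_nil_r. Qed.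

Definition chainok (A B : ef) (l : list (carrier A * carrier B)) :=
  forall i, 1 <= i <= length l ->
    fam A (pi1set A B (set_of_list (firstn i l))) /\
    fam B (pi2set A B (set_of_list (firstn i l))).

Lemma chainok_prefix A B (l2 r : list (carrier A * carrier B)) : chainok A B (l2 ++ r) -> chainok A B l2.
Proof.
  intros H i Hi. rewrite <- (firstn_app_le l2 r i) by lia. apply H. rewrite length_app; lia.
Qed.

Lemma list_lift {D T} (X : (D -> Prop) -> Prop) (P : (D -> Prop) -> (T -> Prop)) l :
  (forall y, In y l -> exists x, X x /\ y = P x) ->
  exists lx, (forall x, In x lx -> X x) /\ forall y, In y l -> exists x, In x lx /\ y = P x.
Proof.
  induction l as [|y l IH]; intro H.
  - exists []. simpl; tauto.
  - destruct IH as [lx [H1 H2]]. { intros; apply H; simpl; auto. }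
    destruct (H y (or_introl eq_refl)) as [x [Hx ->]].
    exists (x :: lx). split.
    + intros x' [<-|]; auto.
    + intros y' [<-|Hy]. * exists x; simpl; auto. * destruct (H2 y' Hy) as [x' [? ?]]; exists x'; simpl; auto.
Qed.

Lemma fc_image {D T} (FD : (D->Prop)->Prop) (F : (T->Prop)->Prop) (P : (D->Prop) -> (T->Prop)) :
  family_of_configurations F ->
  (forall x y, subset x y -> subset (P x) (P y)) ->
  (forall X, P (bigunion X) = bigunion (fun y => exists x, X x /\ y = P x)) ->
  (forall x, FD x -> F (P x)) ->
  forall X, subset X FD -> fin_compatible FD X -> F (P (bigunion X)).
Proof.
  intros HF Hmono Hcomm HP X HX Hfc. rewrite Hcomm. apply (proj1 HF).
  - intros y [x [Hx ->]]. auto.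
  - intros l Hl. destruct (list_lift X P l Hl) as [lx [H1 H2]].
    destruct (Hfc lx H1) as [z [Hz Hsub]]. exists (P z). split; auto.
    intros y Hy. destruct (H2 y Hy) as [x [Hin ->]]. apply Hmono; auto.
Qed.

Lemma pi1_mono A B x y : subset x y -> subset (pi1set A B x) (pi1set A B y).
Proof. intros H a [b Hb]. exists b; auto. Qed.
Lemma pi2_mono A B x y : subset x y -> subset (pi2set A B x) (pi2set A B y).
Proof. intros H b [a Ha]. exists a; auto. Qed.
Lemma pi1_comm A B X : pi1set A B (bigunion X) = bigunion (fun y => exists x, X x /\ y = pi1set A B x).
Proof. apply pred_ext; intro a; split.
  - intros [b [x [Hx Hab]]]. exists (pi1set A B x). split; eauto. exists b; auto.
  - intros [y [[x [Hx ->]] [b Hb]]]. exists b, x; auto. Qed.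
Lemma pi2_comm A B X : pi2set A B (bigunion X) = bigunion (fun y => exists x, X x /\ y = pi2set A B x).
Proof. apply pred_ext; intro a; split.
  - intros [b [x [Hx Hab]]]. exists (pi2set A B x). split; eauto. exists b; auto.
  - intros [y [[x [Hx ->]] [b Hb]]]. exists b, x; auto. Qed.

Lemma famD_prefix A B C f g x l i :
  famD A B C f g x -> (forall d', In d' l -> x d') -> chainok A B l ->
  1 <= i <= length l -> famD A B C f g (set_of_list (firstn i l)).
Proof.
  intros Hx Hl Hc Hi. destruct Hx as [HxD _].
  split; [|split; [|split]].
  - intros e He. apply HxD, Hl, (In_firstn e i l), He.
  - apply (Hc i Hi).
  - apply (Hc i Hi).
  - intros d Hd. unfold set_of_list in Hd. destruct (in_split _ _ Hd) as [l1 [l2 E]].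
    exists (l1 ++ [d]). split; [|split; [|split]].
    + destruct l1; discriminate.
    + apply last_last.
    + intros d' Hd'. unfold set_of_list. rewrite E. apply in_app_or in Hd'. apply in_or_app.
      destruct Hd' as [|[<-|[]]]; simpl; auto.
    + apply (chainok_prefix A B _ l2). rewrite <- app_assoc. simpl. rewrite <- E.
      apply (chainok_prefix A B _ (skipn i l)). rewrite firstn_skipn. exact Hc.
Qed.

Lemma isef_pbD A B C f g : is_ef A -> is_ef B -> is_ef C -> is_map A C f -> is_map B C g ->
  is_ef (pbD A B C f g).
Proof.
  intros HA HB HC Hf Hg. split; [split|].
  - intros X HX Hfc. simpl in *. split; [|split; [|split]].
    + intros d [x [Hx Hd]]. apply (HX x Hx), Hd.
    + apply (fc_image (famD A B C f g) (fam A) (pi1set A B) (proj1 HA) (pi1_mono A B) (pi1_comm A B)); auto.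
      intros x Hx; apply Hx.
    + apply (fc_image (famD A B C f g) (fam B) (pi2set A B) (proj1 HB) (pi2_mono A B) (pi2_comm A B)); auto.
      intros x Hx; apply Hx.
    + intros d [x [Hx Hd]]. destruct (proj2 (proj2 (proj2 (HX x Hx))) d Hd) as [l [H1 [H2 [H3 H4]]]].
      exists l; repeat split; auto. intros d' Hd'. exists x; auto. apply H4; auto. apply H4; auto.
  - intros x e Hx He. simpl in *. destruct (proj2 (proj2 (proj2 Hx)) e He) as [l [H1 [H2 [H3 H4]]]].
    exists l; split; [|split; [|split]]; auto. intros i Hi. apply (famD_prefix A B C f g x l i); auto.
  - assert (HU : forall d, inU (pbD A B C f g) d -> inU A (fst d) /\ inU B (snd d)).
    { intros d [x [Hx Hd]]. destruct (proj1 Hx d Hd) as [? [? _]]; auto. }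
    destruct HA as [_ [RA [SA TA]]]. destruct HB as [_ [RB [SB TB]]].
    split; [|split].
    + intros d Hd; destruct (HU d Hd); split; simpl; auto.
    + intros d1 d2 H1 H2 [E1 E2]; destruct (HU d1 H1); destruct (HU d2 H2); split; simpl; auto.
    + intros d1 d2 d3 H1 H2 H3 [E1 E2] [F1 F2]; destruct (HU d1 H1); destruct (HU d2 H2); destruct (HU d3 H3);
      split; simpl; eauto.
Qed.

Lemma inU_fam {D : ef} x d : fam D x -> x d -> inU D d.
Proof. intros; exists x; auto. Qed.

Lemma inU_pbD A B C f g d : inU (pbD A B C f g) d -> inD A B C f g d.
Proof. intros [x [Hx Hd]]. apply (proj1 Hx d Hd). Qed.

Lemma ismap_pi1 A B C f g : is_ef A -> is_ef B -> is_ef C -> is_map A C f -> is_map B C g ->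
  is_map (pbD A B C f g) A (pi1 A B C f g).
Proof.
  intros HA HB HC Hf Hg. split; [|split; [|split]].
  - intros d Hd b E. injection E as <-. apply (inU_pbD _ _ _ _ _ _ Hd).
  - intros d1 d2 _ _ [E _]. right. exists (fst d1), (fst d2). auto.
  - intros x Hx. replace (image (pi1 A B C f g) x) with (pi1set A B x). apply Hx.
    apply pred_ext; intro a; split.
    + intros [b Hb]. exists (a,b); auto.
    + intros [[a' b] [H E]]. injection E as <-. exists b; auto.
  - intros x Hx [a1 b1] [a2 b2] c1 c2 H1 H2 E1 E2 Heq. injection E1 as <-. injection E2 as <-.
    split; simpl; auto.
    destruct (proj1 Hx _ H1) as [UA1 [UB1 [c1 [c1' [F1 [G1 Q1]]]]]].
    destruct (proj1 Hx _ H2) as [UA2 [UB2 [c2 [c2' [F2 [G2 Q2]]]]]]. simpl in *.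
    apply (proj2 (proj2 (proj2 Hg)) (pi2set A B x) (proj1 (proj2 (proj2 Hx))) b1 b2 c1' c2'); auto.
    + exists a1; auto.
    + exists a2; auto.
    + destruct HC as [_ [RC [SC TC]]].
      assert (UC1 : inU C c1) by (apply (proj1 Hf a1); auto).
      assert (UC2 : inU C c2) by (apply (proj1 Hf a2); auto).
      assert (UC1' : inU C c1') by (apply (proj1 Hg b1); auto).
      assert (UC2' : inU C c2') by (apply (proj1 Hg b2); auto).
      assert (E12 : eqv C c1 c2).
      { destruct (proj1 (proj2 Hf) a1 a2 UA1 UA2 Heq) as [[N _]|[k1 [k2 [K1 [K2 K]]]]].
        - congruence.
        - congruence. }
      apply (TC c1' c1 c2'); auto. apply (TC c1 c2 c2'); auto.
Qed.

Lemma ismap_pi2 A B C f g : is_ef A -> is_ef B -> is_ef C -> is_map A C f -> is_map B C g ->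
  is_map (pbD A B C f g) B (pi2 A B C f g).
Proof.
  intros HA HB HC Hf Hg. split; [|split; [|split]].
  - intros d Hd b E. injection E as <-. apply (inU_pbD _ _ _ _ _ _ Hd).
  - intros d1 d2 _ _ [_ E]. right. exists (snd d1), (snd d2). auto.
  - intros x Hx. replace (image (pi2 A B C f g) x) with (pi2set A B x). apply Hx.
    apply pred_ext; intro b; split.
    + intros [a Hb]. exists (a,b); auto.
    + intros [[a b'] [H E]]. injection E as <-. exists a; auto.
  - intros x Hx [a1 b1] [a2 b2] c1 c2 H1 H2 E1 E2 Heq. injection E1 as <-. injection E2 as <-.
    split; simpl; auto.
    destruct (proj1 Hx _ H1) as [UA1 [UB1 [c1 [c1' [F1 [G1 Q1]]]]]].
    destruct (proj1 Hx _ H2) as [UA2 [UB2 [c2 [c2' [F2 [G2 Q2]]]]]]. simpl in *.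
    apply (proj2 (proj2 (proj2 Hf)) (pi1set A B x) (proj1 (proj2 Hx)) a1 a2 c1 c2); auto.
    + exists b1; auto.
    + exists b2; auto.
    + destruct HC as [_ [RC [SC TC]]].
      assert (UC1 : inU C c1) by (apply (proj1 Hf a1); auto).
      assert (UC2 : inU C c2) by (apply (proj1 Hf a2); auto).
      assert (UC1' : inU C c1') by (apply (proj1 Hg b1); auto).
      assert (UC2' : inU C c2') by (apply (proj1 Hg b2); auto).
      assert (E12 : eqv C c1' c2').
      { destruct (proj1 (proj2 Hg) b1 b2 UB1 UB2 Heq) as [[N _]|[k1 [k2 [K1 [K2 K]]]]].
        - congruence.
        - congruence. }
      apply (TC c1 c1' c2); auto. apply (TC c1' c2' c2); auto.
Qed.

Fixpoint omap {X Y} (h : X -> option Y) (l : list X) : list Y :=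
  match l with [] => [] | x :: t => match h x with Some y => y :: omap h t | None => omap h t end end.

Lemma In_omap {X Y} (h : X -> option Y) l y : In y (omap h l) <-> exists x, In x l /\ h x = Some y.
Proof.
  induction l as [|x t IH]; simpl. - split; [tauto|]. intros [? [[] _]].
  - destruct (h x) eqn:E; simpl; rewrite IH; split.
    + intros [<-|[x' [? ?]]]; eauto.
    + intros [x' [[<-|?] ?]]. left; congruence. eauto.
    + intros [x' [? ?]]; eauto.
    + intros [x' [[<-|?] ?]]. congruence. eauto.
Qed.

Lemma omap_app {X Y} (h : X -> option Y) l1 l2 : omap h (l1 ++ l2) = omap h l1 ++ omap h l2.
Proof. induction l1 as [|x t IH]; simpl; auto. destruct (h x); simpl; rewrite IH; auto. Qed.

Lemma omap_firstn {X Y} (h : X -> option Y) l : forall i, i <= length (omap h l) ->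
  exists j, j <= length l /\ firstn i (omap h l) = omap h (firstn j l).
Proof.
  induction l as [|x t IH]; simpl; intros i Hi.
  - exists 0. simpl. split; auto. destruct i; auto.
  - destruct (h x) eqn:E.
    + destruct i as [|i]. * exists 0; simpl; auto with arith.
      * simpl in Hi. destruct (IH i) as [j [Hj Ej]]; [lia|]. exists (S j). simpl. rewrite E, Ej. split; auto; lia.
    + destruct (IH i Hi) as [j [Hj Ej]]. exists (S j). simpl. rewrite E, Ej. split; auto; lia.
Qed.

Definition hmap {D' A B : ef} (p' : pmap D' A) (q' : pmap D' B) : carrier D' -> option (carrier A * carrier B) :=
  fun d => match p' d, q' d with Some a, Some b => Some (a,b) | _, _ => None end.

Lemma univ (A B C : ef) f g (D' : ef) (p' : pmap D' A) (q' : pmap D' B) :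
  is_ef A -> is_ef B -> is_ef C -> is_map A C f -> is_map B C g -> total_map A C f -> total_map B C g ->
  is_ef D' -> is_map D' A p' -> is_map D' B q' -> map_equiv (comp f p') (comp g q') ->
  exists h : pmap D' (pbD A B C f g), is_map D' (pbD A B C f g) h /\
      map_eq p' (comp (pi1 A B C f g) h) /\ map_eq q' (comp (pi2 A B C f g) h) /\
      forall h' : pmap D' (pbD A B C f g), is_map D' (pbD A B C f g) h' ->
        map_eq p' (comp (pi1 A B C f g) h') -> map_eq q' (comp (pi2 A B C f g) h') -> map_eq h' (hmap p' q').
Proof.
  intros HA HB HC Hf Hg Tf Tg HD Hp Hq Heq.
  assert (Hnone : forall d, inU D' d -> (p' d = None <-> q' d = None)).
  { intros d Hd. destruct (Heq d Hd) as [E _]. unfold comp in E.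
    destruct (p' d) as [a|] eqn:Pa; destruct (q' d) as [b|] eqn:Qb;
      try (split; intro; discriminate); try tauto.
    - destruct (Tf a (proj1 Hp d Hd a Pa)) as [c Hc]. rewrite Hc in E.
      destruct E as [_ E]. specialize (E eq_refl). discriminate.
    - destruct (Tg b (proj1 Hq d Hd b Qb)) as [c Hc]. rewrite Hc in E.
      destruct E as [E _]. specialize (E eq_refl). discriminate. }
  assert (Hsome : forall d a b, inU D' d -> p' d = Some a -> q' d = Some b -> inD A B C f g (a,b)).
  { intros d a b Hd Pa Qb. pose proof (proj1 Hp d Hd a Pa) as UA. pose proof (proj1 Hq d Hd b Qb) as UB.
    destruct (Tf a UA) as [c1 F1]. destruct (Tg b UB) as [c2 G2].
    split; [|split]; auto. exists c1, c2. split; [|split]; auto.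
    apply (proj2 (Heq d Hd)); unfold comp; rewrite ?Pa, ?Qb; auto. }
  set (h := hmap p' q').
  assert (Hpi1 : forall s, subset s (inU D') -> pi1set A B (@image D' (pbD A B C f g) h s) = image p' s).
  { intros s Hs. apply pred_ext; intro a; split.
    - intros [b [d [Hd E]]]. exists d. split; auto. unfold h, hmap in E.
      destruct (p' d), (q' d); congruence.
    - intros [d [Hd Pa]]. destruct (q' d) as [b|] eqn:Qb.
      + exists b, d. split; auto. unfold h, hmap. rewrite Pa, Qb; auto.
      + apply (Hnone d (Hs d Hd)) in Qb. congruence. }
  assert (Hpi2 : forall s, subset s (inU D') -> pi2set A B (@image D' (pbD A B C f g) h s) = image q' s).
  { intros s Hs. apply pred_ext; intro b; split.
    - intros [a [d [Hd E]]]. exists d. split; auto. unfold h, hmap in E.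
      destruct (p' d), (q' d); congruence.
    - intros [d [Hd Qb]]. destruct (p' d) as [a|] eqn:Pa.
      + exists a, d. split; auto. unfold h, hmap. rewrite Pa, Qb; auto.
      + apply (Hnone d (Hs d Hd)) in Pa. congruence. }
  assert (Hsl : forall l, set_of_list (omap h l) = @image D' (pbD A B C f g) h (set_of_list l)).
  { intro l. apply pred_ext; intro e. unfold set_of_list. rewrite In_omap. reflexivity. }
  assert (Hfam : forall x, fam D' x -> famD A B C f g (@image D' (pbD A B C f g) h x)).
  { intros x Hx. assert (Sx : subset x (inU D')) by (intros d Hd; exists x; auto).
    split; [|split; [|split]].
    - intros [a b] [d [Hd E]]. unfold h, hmap in E.
      destruct (p' d) eqn:Pa, (q' d) eqn:Qb; try discriminate. injection E as <- <-.
      apply (Hsome d); auto.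
    - rewrite Hpi1 by auto. apply (proj1 (proj2 (proj2 Hp))); auto.
    - rewrite Hpi2 by auto. apply (proj1 (proj2 (proj2 Hq))); auto.
    - intros e [d [Hd E]].
      destruct (proj2 (proj1 HD) x d Hx Hd) as [l [L1 [L2 [L3 L4]]]].
      destruct (exists_last L1) as [l0 [d0 El]]. subst l. rewrite last_last in L2. subst d0.
      exists (omap h (l0 ++ [d])). split; [|split; [|split]].
      + rewrite omap_app. simpl. rewrite E. destruct (omap h l0); discriminate.
      + rewrite omap_app. simpl. rewrite E. apply last_last.
      + intros e' He'. apply In_omap in He'. destruct He' as [d' [? ?]]. exists d'; auto.
      + intros i Hi. destruct (omap_firstn h (l0 ++ [d]) i (proj2 Hi)) as [j [Hj Ej]].
        assert (Hj1 : 1 <= j).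
        { destruct j; [|lia]. simpl in Ej. assert (length (firstn i (omap h (l0 ++ [d]))) = 0) by (rewrite Ej; auto).
          rewrite firstn_length_le in H by lia. lia. }
        assert (Sj : subset (set_of_list (firstn j (l0 ++ [d]))) (inU D')).
        { intros d' Hd'. apply Sx, L3, (In_firstn d' j), Hd'. }
        rewrite Ej, Hsl, Hpi1, Hpi2 by auto. split.
        * apply (proj1 (proj2 (proj2 Hp))). apply L4; lia.
        * apply (proj1 (proj2 (proj2 Hq))). apply L4; lia. }
  exists h. split; [|split; [|split]].
  - split; [|split; [|split]].
    + intros d Hd e E. destruct Hd as [x [Hx Hd]]. exists (@image D' (pbD A B C f g) h x). split; [apply Hfam; auto|]. exists d; auto.
    + intros d1 d2 H1 H2 E. unfold h, hmap.
      destruct (proj1 (proj2 Hp) d1 d2 H1 H2 E) as [[P1 P2]|[a1 [a2 [P1 [P2 Ea]]]]];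
      destruct (proj1 (proj2 Hq) d1 d2 H1 H2 E) as [[Q1 Q2]|[b1 [b2 [Q1 [Q2 Eb]]]]];
      rewrite ?P1, ?P2, ?Q1, ?Q2; auto.
      * right. exists (a1,b1), (a2,b2). repeat split; auto.
    + exact Hfam.
    + intros x Hx d1 d2 [a1 b1] [a2 b2] H1 H2 E1 E2 [Ea Eb]. simpl in Ea.
      unfold h, hmap in E1, E2.
      destruct (p' d1) eqn:P1, (q' d1) eqn:Q1; try discriminate.
      destruct (p' d2) eqn:P2, (q' d2) eqn:Q2; try discriminate.
      injection E1 as -> ->. injection E2 as -> ->.
      apply (proj2 (proj2 (proj2 Hp)) x Hx d1 d2 a1 a2); auto.
  - intros d Hd. unfold comp, h, hmap, pi1. destruct (p' d) eqn:Pa, (q' d) eqn:Qb; auto.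
    apply (Hnone d Hd) in Qb; congruence.
  - intros d Hd. unfold comp, h, hmap, pi2. destruct (p' d) eqn:Pa, (q' d) eqn:Qb; auto.
    apply (Hnone d Hd) in Pa; congruence.
  - intros h' _ E1 E2 d Hd. specialize (E1 d Hd). specialize (E2 d Hd).
    unfold comp, pi1, pi2 in E1, E2. unfold h, hmap. rewrite E1, E2.
    destruct (h' d) as [[a b]|]; auto.
Qed.

Theorem mainTheorem9 (A B C : ef) (f : pmap A C) (g : pmap B C) :
  is_ef A -> is_ef B -> is_ef C ->
  is_map A C f -> is_map B C g -> total_map A C f -> total_map B C g ->
  pseudo_pullback A B C f g (pbD A B C f g) (pi1 A B C f g) (pi2 A B C f g) /\
  ((forall c c', inU C c -> inU C c' -> (eqv C c c' <-> c = c')) ->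
   pullback A B C f g (pbD A B C f g) (pi1 A B C f g) (pi2 A B C f g)).
Proof.
  intros HA HB HC Hf Hg Tf Tg.
  pose proof (isef_pbD A B C f g HA HB HC Hf Hg) as HD.
  pose proof (ismap_pi1 A B C f g HA HB HC Hf Hg) as H1.
  pose proof (ismap_pi2 A B C f g HA HB HC Hf Hg) as H2.
  split.
  - split; [|split; [|split; [|split]]]; auto.
    + intros d Hd. destruct (inU_pbD _ _ _ _ _ _ Hd) as [_ [_ [c1 [c2 [F [G E]]]]]].
      unfold comp, pi1, pi2. rewrite F, G. split; [split; discriminate|].
      intros b1 b2 E1 E2. injection E1 as <-. injection E2 as <-. auto.
    + intros D' p' q' HD' Hp Hq Heq.
      destruct (univ A B C f g D' p' q' HA HB HC Hf Hg Tf Tg HD' Hp Hq Heq) as [h [? [? [? U]]]].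
      exists h; split; [auto|split; [auto|split; [auto|]]].
      intros h' ? ? ? d Hd. rewrite (U h' ltac:(auto) ltac:(auto) ltac:(auto) d Hd).
      symmetry. apply (U h); auto.
  - intros Hid. split; [|split; [|split; [|split]]]; auto.
    + intros d Hd. pose proof (inU_pbD _ _ _ _ _ _ Hd) as [UA [UB [c1 [c2 [F [G E]]]]]].
      unfold comp, pi1, pi2. rewrite F, G. f_equal. apply Hid; auto.
      * apply (proj1 Hf (fst d)); auto.
      * apply (proj1 Hg (snd d)); auto.
    + intros D' p' q' HD' Hp Hq Heq.
      assert (Heq' : map_equiv (comp f p') (comp g q')).
      { intros d Hd. pose proof (Heq d Hd) as Q. split; [rewrite Q; tauto|].
        intros b1 b2 E1 E2. assert (b1 = b2) by congruence. subst b2.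
        unfold comp in E1. destruct (p' d) as [a|] eqn:Pa; [|discriminate].
        apply Hid; auto; apply (proj1 Hf a); auto; apply (proj1 Hp d); auto. }
      destruct (univ A B C f g D' p' q' HA HB HC Hf Hg Tf Tg HD' Hp Hq Heq') as [h [? [? [? U]]]].
      exists h; split; [auto|split; [auto|split; [auto|]]].
      intros h' ? ? ? d Hd. rewrite (U h' ltac:(auto) ltac:(auto) ltac:(auto) d Hd).
      symmetry. apply (U h); auto.
Qed.
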